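(* Let $A,B$ be noncommuting matrices in $\mathrm{SL}_2\mathbb{R}$, both with trace $\ge 2$. Then the pair $A,B$ is coherently oriented if and only if there exists $C\in\mathrm{SL}_2\mathbb{R}$ such that $CAC^{-1}$ and $CBC^{-1}$ have nonnegative entries.
   Context: $\mathrm{SL}_2\mathbb{R}$ acts on $\partial\mathcal{H}=\mathbb{P}^1\mathbb{R}$ by Möbius transformations $\begin{pmatrix}a&b\\c&d\end{pmatrix}*z=(az+b)/(cz+d)$. For a hyperbolic matrix $A$ (trace $>2$), $\alpha^+$ and $\alpha^-$ denote its attracting and repelling fixed points in $\partial\mathcal{H}$; for a parabolic $A$ (trace $2$, $A\neq I$), $\alpha^+=\alpha^-$ is its unique fixed point; similarly $\beta^\pm$ for $B$. The circle $\partial\mathcal{H}$ is cyclically (counterclockwise) ordered, and for distinct $\alpha,\beta$ the closed interval $[\alpha,\beta]$ consists of $\alpha,\beta$ and the points met travelling counterclockwise from $\alpha$ to $\beta$. If $\alpha^+=\beta^+$ let $I^+=\{\alpha^+\}$; otherwise $I^+$ is the one of the intervals $[\alpha^+,\beta^+]$, $[\beta^+,\alpha^+]$ mapped into itself by both $A$ and $B$, if such exists (else undefined). $I^-$ is defined likewise using $A^{-1},B^{-1}$ and $\alpha^-,\beta^-$. The pair $A,B$ is coherently oriented if both $I^+$ and $I^-$ are defined. *)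

(* Defs.v *)
From mathcomp Require Import all_boot all_order all_algebra.
From mathcomp Require Import reals.
Set Implicit Arguments. Unset Strict Implicit. Unset Printing Implicit Defensive.
Import Order.TTheory GRing.Theory Num.Theory.
Local Open Scope ring_scope.

Section P1.
Variable R : realType.

Definition SL2 (A : 'M[R]_2) : Prop := \det A = 1.

(* The boundary circle P^1(R) = R ∪ {∞}: [Some z] is z, [None] is ∞. *)
Definition P1 := option R.

Definition hvec (p : P1) : 'cV[R]_2 :=
  match p with
  | Some z => \col_i (if i == 0 then z else 1)
  | None => \col_i (if i == 0 then 1 else 0)
  end.

Definition mob (A : 'M[R]_2) (p : P1) : P1 :=
  let a := A 0 0 in let b := A 0 1 in let c := A 1 0 in let d := A 1 1 in
  match p with
  | Some z => if c * z + d == 0 then None else Some ((a * z + b) / (c * z + d))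
  | None => if c == 0 then None else Some (a / c)
  end.

(* Attracting fixed point alpha^+ of A (trace >= 2, A <> I): the fixed point
   whose homogeneous eigenvalue is >= 1 (for hyperbolic A this is the
   eigenline of the eigenvalue > 1, where the Möbius derivative 1/lambda^2 < 1;
   for parabolic A it is the unique fixed point, eigenvalue 1). *)
Definition attracting_fp (A : 'M[R]_2) (p : P1) : Prop :=
  mob A p = p /\ exists lam : R, 1 <= lam /\ A *m hvec p = lam *: hvec p.

Definition repelling_fp (A : 'M[R]_2) (p : P1) : Prop :=
  mob A p = p /\ exists lam : R, 0 < lam /\ lam <= 1 /\ A *m hvec p = lam *: hvec p.

(* Counterclockwise (= increasing along R, then through ∞) order.
   Auxiliary linear order on P1 with ∞ on top. *)
Definition ple (x y : P1) : bool :=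
  match x, y with
  | _, None => true
  | None, Some _ => false
  | Some u, Some v => u <= v
  end.

Definition in_ccw (a b x : P1) : bool :=
  if ple a b then ple a x && ple x b else ple a x || ple x b.

Definition maps_into_self (A : 'M[R]_2) (a b : P1) : Prop :=
  forall x, in_ccw a b x -> in_ccw a b (mob A x).

Definition I_defined (A B : 'M[R]_2) (a b : P1) : Prop :=
  a = b \/
  (maps_into_self A a b /\ maps_into_self B a b) \/
  (maps_into_self A b a /\ maps_into_self B b a).

Definition coherently_oriented (A B : 'M[R]_2) : Prop :=
  exists ap am bp bm : P1,
    attracting_fp A ap /\ repelling_fp A am /\
    attracting_fp B bp /\ repelling_fp B bm /\
    I_defined A B ap bp /\ I_defined (invmx A) (invmx B) am bm.

Definition nonneg_mx (M : 'M[R]_2) : Prop := forall i j, 0 <= M i j.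

End P1.

(* Main.v *)
Require Import Defs.
From mathcomp Require Import all_boot all_order all_algebra.
From mathcomp Require Import reals.
From mathcomp Require Import ring lra.
Import Order.TTheory GRing.Theory Num.Theory.
Local Open Scope ring_scope.
Set Implicit Arguments. Unset Strict Implicit. Unset Printing Implicit Defensive.

Section Aux.
Variable R : realType.
Implicit Types (M N C : 'M[R]_2) (u v : 'cV[R]_2) (p q x : P1 R).

Lemma det22 M : \det M = M 0 0 * M 1 1 - M 0 1 * M 1 0.
Proof.
rewrite (expand_det_row _ 0) !big_ord_recr big_ord0 /= add0r.
rewrite /cofactor !det_mx11 !mxE /=.
have e1 : widen_ord (m:=2) (leqnSn 1) ord_max = 0 by apply/val_inj.
have e2 : lift 0 (0 : 'I_1) = 1 :> 'I_2 by apply/val_inj.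
have e3 : lift ord_max (0 : 'I_1) = 0 :> 'I_2 by apply/val_inj.
have e4 : ord_max = 1 :> 'I_2 by apply/val_inj.
rewrite e1 e3 e4 e2 /= expr0 expr1; ring.
Qed.
Lemma sum2 (F : 'I_2 -> R) : \sum_i F i = F 0 + F 1.
Proof.
rewrite !big_ord_recr big_ord0 /= add0r.
have e1 : widen_ord (m:=2) (leqnSn 1) ord_max = 0 by apply/val_inj.
have e4 : ord_max = 1 :> 'I_2 by apply/val_inj.
by rewrite e1 e4.
Qed.
Lemma mul22 M N i j : (M *m N) i j = M i 0 * N 0 j + M i 1 * N 1 j.
Proof. by rewrite mxE sum2. Qed.
Lemma mulv22 M v i j : (M *m v) i j = M i 0 * v 0 j + M i 1 * v 1 j.
Proof. by rewrite mxE sum2. Qed.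
Lemma ord2 (i : 'I_2) : i = 0 \/ i = 1.
Proof. case: i => [[|[|//]]] Hi; [left|right]; exact/val_inj. Qed.
Lemma eq22 M N : M 0 0 = N 0 0 -> M 0 1 = N 0 1 -> M 1 0 = N 1 0 -> M 1 1 = N 1 1 -> M = N.
Proof.
move=> h1 h2 h3 h4; apply/matrixP => i j.
by case: (ord2 i) => ->; case: (ord2 j) => ->.
Qed.
Lemma eqv2 u v : u 0 0 = v 0 0 -> u 1 0 = v 1 0 -> u = v.
Proof.
move=> h1 h2; apply/matrixP => i j.
have -> : j = 0 by apply/val_inj; case: j => [[]].
by case: (ord2 i) => ->.
Qed.
Lemma tr22 M : \tr M = M 0 0 + M 1 1.
Proof. by rewrite /mxtrace sum2. Qed.

Lemma nz2 v : v != 0 -> v 0 0 != 0 \/ v 1 0 != 0.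
Proof.
move=> hv; case: (eqVneq (v 0 0) 0) => h0; last by left.
case: (eqVneq (v 1 0) 0) => h1; last by right.
have hz : v = 0 by apply: eqv2; rewrite mxE.
by rewrite hz eqxx in hv.
Qed.

Definition mk22 (a b c d : R) : 'M[R]_2 :=
  \matrix_(i, j) if i == 0 then (if j == 0 then a else b) else (if j == 0 then c else d).
Lemma mk22E a b c d :
  [/\ mk22 a b c d 0 0 = a, mk22 a b c d 0 1 = b, mk22 a b c d 1 0 = c & mk22 a b c d 1 1 = d].
Proof. by rewrite /mk22 !mxE. Qed.

Lemma hvecS (z : R) : hvec (Some z) 0 0 = z /\ hvec (Some z) 1 0 = 1.
Proof. by rewrite /hvec !mxE. Qed.
Lemma hvecN : hvec (None : P1 R) 0 0 = 1 /\ hvec (None : P1 R) 1 0 = 0.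
Proof. by rewrite /hvec !mxE. Qed.

Definition w u v : R := u 0 0 * v 1 0 - u 1 0 * v 0 0.
Definition pt v : P1 R := if v 1 0 == 0 then None else Some (v 0 0 / v 1 0).
Definition kpt v : R := if v 1 0 == 0 then (v 0 0)^-1 else (v 1 0)^-1.

Lemma mobE M p : mob M p = pt (M *m hvec p).
Proof.
case: p => [z|]; rewrite /mob /pt !mulv22.
  by case: (hvecS z) => -> ->; rewrite !mulr1.
by case: hvecN => -> ->; rewrite !mulr1 !mulr0 !addr0.
Qed.

Lemma pt_scale k v : k != 0 -> pt (k *: v) = pt v.
Proof.
move=> hk; rewrite /pt !mxE mulf_eq0 (negbTE hk) /=.
case: eqP => // h; congr Some; rewrite invfM mulrACA divff // mul1r //.
Qed.

Lemma pt_hvec p : pt (hvec p) = p.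
Proof.
case: p => [z|]; rewrite /pt.
  by case: (hvecS z) => -> ->; rewrite oner_eq0 divr1.
by case: hvecN => _ ->; rewrite eqxx.
Qed.

Lemma kpt_nz v : v != 0 -> kpt v != 0.
Proof.
move=> /nz2 hv; rewrite /kpt; case: ifP => h; rewrite invr_eq0.
  by case: hv => //; rewrite h.
by rewrite h.
Qed.

Lemma hvec_pt v : v != 0 -> hvec (pt v) = kpt v *: v.
Proof.
move=> /nz2 hv; rewrite /pt /kpt; case: ifP => h; apply: eqv2; rewrite !mxE /=.
- have h0 : v 0 0 != 0 by case: hv => //; rewrite h.
  by rewrite mulVf.
- by rewrite (eqP h) mulr0.
- by rewrite mulrC.
- by rewrite mulVf // h.
Qed.

Lemma hvec_nz p : hvec p != 0.
Proof.
apply/eqP => h; case: p h => [z|] h.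
  by move: (hvecS z) => [_]; rewrite h mxE => /eqP; rewrite eq_sym oner_eq0.
by move: hvecN => [+ _]; rewrite h mxE => /eqP; rewrite eq_sym oner_eq0.
Qed.

Lemma unit_det M : \det M != 0 -> M \in unitmx.
Proof. by move=> h; rewrite unitmxE unitfE. Qed.

Lemma mulmx_nz M v : \det M != 0 -> v != 0 -> M *m v != 0.
Proof.
move=> hM hv; apply/eqP => h; move/eqP: hv; apply.
by rewrite -(mulKmx (unit_det hM) v) h mulmx0.
Qed.

Lemma mob_comp M N p : \det N != 0 -> mob M (mob N p) = mob (M *m N) p.
Proof.
move=> hN; rewrite !mobE hvec_pt; last by apply: mulmx_nz => //; exact: hvec_nz.
rewrite -scalemxAr pt_scale ?mulmxA //.
apply: kpt_nz; apply: mulmx_nz => //; exact: hvec_nz.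
Qed.

Lemma mob1 p : mob 1%:M p = p.
Proof. by rewrite mobE mul1mx pt_hvec. Qed.

Lemma w_mul M u v : w (M *m u) (M *m v) = \det M * w u v.
Proof. rewrite /w !mulv22 det22; ring. Qed.
Lemma w_scalel k u v : w (k *: u) v = k * w u v.
Proof. rewrite /w !mxE; ring. Qed.
Lemma w_scaler k u v : w u (k *: v) = k * w u v.
Proof. rewrite /w !mxE; ring. Qed.
Lemma w_anti u v : w v u = - w u v.
Proof. rewrite /w; ring. Qed.

Lemma w_hvec_eq0 p q : w (hvec p) (hvec q) = 0 -> p = q.
Proof.
rewrite /w; case: p => [a|]; case: q => [b|];
  rewrite ?(proj1 (hvecS _)) ?(proj2 (hvecS _)) ?(proj1 hvecN) ?(proj2 hvecN) //.
- by move/eqP; rewrite mulr1 mul1r subr_eq0 => /eqP ->.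
- by move/eqP; rewrite mulr0 mul1r sub0r oppr_eq0 oner_eq0.
- by move/eqP; rewrite mulr1 mul0r subr0 oner_eq0.
Qed.

Lemma ple_w p q : ple p q = (w (hvec p) (hvec q) <= 0).
Proof.
rewrite /w; case: p => [a|]; case: q => [b|] /=;
  rewrite ?(proj1 (hvecS _)) ?(proj2 (hvecS _)) ?(proj1 hvecN) ?(proj2 hvecN).
- by rewrite mulr1 mul1r subr_le0.
- by rewrite mulr0 mul1r sub0r oppr_le0 ler01.
- by rewrite mulr1 mul0r subr0 ler10.
- by rewrite mulr0 mul0r subr0 lexx.
Qed.

Lemma sign_lemma (A B Cc : R) : Cc != 0 -> (A <= 0 -> B <= 0 -> Cc <= 0) -> (0 <= A -> 0 <= B -> 0 <= Cc) ->
  (if Cc <= 0 then (A <= 0) && (B <= 0) else (A <= 0) || (B <= 0)) = (0 <= A * B * - Cc).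
Proof.
move=> hC h1 h2.
case: (lerP Cc 0) => hc.
{ have hc' : 0 < - Cc by rewrite oppr_gt0 lt_neqAle hC hc.
  rewrite pmulr_lge0 //.
  case: (lerP A 0) => ha; case: (lerP B 0) => hb /=; apply/esym.
  all: first [ apply/idP | apply/negbTE; rewrite -ltNge ].
  all: try nra.
  all: try (have := h2 (ltW ha) (ltW hb); lra). }
have hc' : - Cc < 0 by rewrite oppr_lt0.
rewrite nmulr_lge0 //.
case: (lerP A 0) => ha; case: (lerP B 0) => hb /=; apply/esym.
all: first [ apply/idP | apply/negbTE; rewrite -ltNge ].
all: try nra.
all: try (have := h1 ha hb; lra).
Qed.

Definition cyc (u y v : 'cV[R]_2) := w u y * w y v * w v u.

Lemma ple_trans p q r : ple p q -> ple q r -> ple p r.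
Proof. case: p => [a|]; case: q => [b|]; case: r => [c|] //=; exact: le_trans. Qed.

Lemma ple_total p q : ple p q || ple q p.
Proof. case: p => [a|]; case: q => [b|] //=; exact: le_total. Qed.

Lemma ple_refl p : ple p p.
Proof. by case: p => [a|] //=. Qed.

Lemma in_ccw_cyc a b x : a != b -> in_ccw a b x = (0 <= cyc (hvec a) (hvec x) (hvec b)).
Proof.
move=> hab; rewrite /in_ccw /cyc !ple_w (w_anti (hvec a) (hvec b)).
apply: sign_lemma.
- by apply/eqP => /w_hvec_eq0 h; rewrite h eqxx in hab.
- move=> h1 h2; rewrite -ple_w; apply: (@ple_trans _ x); rewrite ple_w //.
- move=> h1 h2; have : ple b a.
    by apply: (@ple_trans _ x); rewrite ple_w w_anti oppr_le0.
  by rewrite ple_w w_anti oppr_le0.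
Qed.

Lemma hvec_mob M p : \det M != 0 -> hvec (mob M p) = kpt (M *m hvec p) *: (M *m hvec p).
Proof. by move=> hM; rewrite mobE hvec_pt //; apply: mulmx_nz => //; exact: hvec_nz. Qed.

Lemma cyc_scale k1 k2 k3 (u y v : 'cV[R]_2) :
  cyc (k1 *: u) (k2 *: y) (k3 *: v) = (k1 * k2 * k3) ^+ 2 * cyc u y v.
Proof. rewrite /cyc !w_scalel !w_scaler; ring. Qed.

Lemma cyc_mul M (u y v : 'cV[R]_2) : cyc (M *m u) (M *m y) (M *m v) = \det M ^+ 3 * cyc u y v.
Proof. rewrite /cyc !w_mul; ring. Qed.

Lemma mob_inv M p : \det M != 0 -> mob (invmx M) (mob M p) = p.
Proof. by move=> hM; rewrite mob_comp // mulVmx ?mob1 // unit_det. Qed.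

Lemma mob_inv' M p : \det M != 0 -> mob M (mob (invmx M) p) = p.
Proof.
move=> hM; rewrite mob_comp ?mulmxV ?mob1 ?unit_det //.
by rewrite det_inv invr_eq0.
Qed.

Lemma mob_inj M p q : \det M != 0 -> mob M p = mob M q -> p = q.
Proof. by move=> hM h; rewrite -(mob_inv p hM) h mob_inv. Qed.

Lemma in_ccw_mob C a b x : 0 < \det C -> a != b ->
  in_ccw (mob C a) (mob C b) (mob C x) = in_ccw a b x.
Proof.
move=> hC hab; have hC0 : \det C != 0 by rewrite gt_eqF.
rewrite !in_ccw_cyc //; last first.
  by apply/eqP => /(mob_inj hC0) h; rewrite h eqxx in hab.
rewrite !hvec_mob // cyc_scale cyc_mul pmulr_rge0; last first.
  rewrite lt_neqAle eq_sym sqrf_eq0 !mulf_neq0 ?sqr_ge0 //.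
  1-3: by apply: kpt_nz; apply: mulmx_nz => //; exact: hvec_nz.
by rewrite pmulr_rge0 // exprn_gt0.
Qed.

Lemma in_ccw_l (a b : P1 R) : in_ccw a b a.
Proof. by rewrite /in_ccw; case: ifP => h; rewrite ple_refl ?h. Qed.
Lemma in_ccw_r (a b : P1 R) : in_ccw a b b.
Proof. by rewrite /in_ccw; case: ifP => h; rewrite ple_refl ?h ?orbT. Qed.

Lemma in_ccw_0inf (y : P1 R) : in_ccw (Some 0) None y = ple (Some 0) y.
Proof. by rewrite /in_ccw /=; case: y => [z|] /=; rewrite ?andbT. Qed.
Lemma in_ccw_inf0 (y : P1 R) : in_ccw None (Some 0) y = (y == None) || ple y (Some 0).
Proof. by rewrite /in_ccw /=; case: y => [z|]. Qed.

Lemma construct P Q : P != Q -> exists C D, \det C = 1 /\ D != 0 /\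
  C *m hvec P = hvec (Some 0) /\ C *m hvec Q = D *: hvec None.
Proof.
move=> hPQ; set p := hvec P; set q := hvec Q.
set D := p 1 0 * q 0 0 - p 0 0 * q 1 0.
have hD : D != 0.
  apply/eqP => h; move/eqP: hPQ; apply; apply: w_hvec_eq0.
  rewrite /w -/p -/q; move: h; rewrite /D => h; lra.
exists (mk22 (p 1 0) (- p 0 0) (- q 1 0 / D) (q 0 0 / D)), D.
case: (mk22E (p 1 0) (- p 0 0) (- q 1 0 / D) (q 0 0 / D)) => e1 e2 e3 e4.
split; [|split => //; split].
- rewrite det22 e1 e2 e3 e4. rewrite -[RHS](divff hD) /D; field; exact: hD.
- apply: eqv2; rewrite !mulv22 ?e1 ?e2 ?e3 ?e4 ?(proj1 (hvecS _)) ?(proj2 (hvecS _)) -/p.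
    ring.
  rewrite -[RHS](divff hD) /D; field; exact: hD.
- apply: eqv2; rewrite !mulv22 ?e1 ?e2 ?e3 ?e4 !mxE ?(proj1 hvecN) ?(proj2 hvecN) -/q /D.
    by rewrite /=; ring.
  rewrite /=; field; exact: hD.
Qed.

Lemma conj_vec C M v : \det C != 0 ->
  (C *m M *m invmx C) *m (C *m v) = C *m (M *m v).
Proof. by move=> hC; rewrite !mulmxA mulmxKV // unit_det. Qed.

Lemma conj_mob C M y : \det C != 0 -> \det M != 0 ->
  mob (C *m M *m invmx C) (mob C y) = mob C (mob M y).
Proof.
move=> hC hM; rewrite mob_comp // mulmxKV ?unit_det //.
by rewrite mob_comp.
Qed.

Lemma det_conj C M : \det C != 0 -> \det (C *m M *m invmx C) = \det M.
Proof. by move=> hC; rewrite !det_mulmx det_inv mulrC mulrA mulVf // mul1r. Qed.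

Lemma eig_conj C M P P0 k (l : R) : \det C != 0 -> k != 0 ->
  C *m hvec P = k *: hvec P0 -> M *m hvec P = l *: hvec P ->
  (C *m M *m invmx C) *m hvec P0 = l *: hvec P0.
Proof.
move=> hC hk hP hM.
have e : hvec P0 = k^-1 *: (C *m hvec P) by rewrite hP scalerA mulVf // scale1r.
rewrite e -scalemxAr conj_vec // hM -scalemxAr !scalerA mulrC //.
Qed.

Lemma mob_of C P P0 k : k != 0 -> C *m hvec P = k *: hvec P0 -> mob C P = P0.
Proof. by move=> hk h; rewrite mobE h pt_scale // pt_hvec. Qed.

Lemma fix0 X (l : R) : X *m hvec (Some 0) = l *: hvec (Some 0) -> X 0 1 = 0 /\ X 1 1 = l.
Proof.
move=> h; have h0 := congr1 (fun m : 'cV[R]_2 => m 0 0) h; have h1 := congr1 (fun m : 'cV[R]_2 => m 1 0) h.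
move: h0 h1 => /=; rewrite !mulv22 !mxE /= => h0 h1; split; lra.
Qed.

Lemma fixInf X (l : R) : X *m hvec None = l *: hvec None -> X 0 0 = l /\ X 1 0 = 0.
Proof.
move=> h; have h0 := congr1 (fun m : 'cV[R]_2 => m 0 0) h; have h1 := congr1 (fun m : 'cV[R]_2 => m 1 0) h.
move: h0 h1 => /=; rewrite !mulv22 !mxE /= => h0 h1; split; lra.
Qed.

Lemma nonneg22 (X : 'M[R]_2) : 0 <= X 0 0 -> 0 <= X 0 1 -> 0 <= X 1 0 -> 0 <= X 1 1 -> nonneg_mx X.
Proof. by move=> h1 h2 h3 h4 i j; case: (ord2 i) => ->; case: (ord2 j) => ->. Qed.

Lemma det_nz M : \det M = 1 -> \det M != 0.
Proof. by move=> ->; rewrite oner_eq0. Qed.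

Lemma arc_plus M N P Q : \det M = 1 -> \det N = 1 ->
  attracting_fp M P -> attracting_fp N Q -> P != Q ->
  maps_into_self M P Q -> maps_into_self N P Q ->
  exists C, SL2 C /\ nonneg_mx (C *m M *m invmx C) /\ nonneg_mx (C *m N *m invmx C).
Proof.
move=> dM dN [_ [l [hl hMP]]] [_ [m [hm hNQ]]] hPQ iM iN.
have [C [D [dC [hD [hCP hCQ]]]]] := construct hPQ.
have dC0 := det_nz dC.
have hCP' : C *m hvec P = 1 *: hvec (Some 0) by rewrite scale1r.
have mP : mob C P = Some 0 := mob_of (oner_neq0 _) hCP'.
have mQ : mob C Q = None := mob_of hD hCQ.
exists C; split => //; split.
- set X := C *m M *m invmx C.
  have [x01 x11] := fix0 (eig_conj dC0 (oner_neq0 _) hCP' hMP).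
  have dX : \det X = 1 by rewrite det_conj.
  move: dX; rewrite det22 x01 x11 mul0r subr0 => dX.
  have x00 : 0 < X 0 0 by nra.
  have h := iM Q (in_ccw_r _ _).
  rewrite -(in_ccw_mob (C:=C) (mob M Q) _ hPQ) ?dC ?ltr01 // in h.
  rewrite mP mQ -conj_mob ?det_nz // mQ in_ccw_0inf /mob -/X in h.
  apply: nonneg22; rewrite ?x01 ?x11 ?lexx; try lra.
  move: h; case: eqP => [->|h10] //= h.
  by move: h; rewrite pmulr_rge0 // invr_ge0.
- set X := C *m N *m invmx C.
  have [x00 x10] := fixInf (eig_conj dC0 hD hCQ hNQ).
  have dX : \det X = 1 by rewrite det_conj.
  move: dX; rewrite det22 x00 x10 mulr0 subr0 => dX.
  have x11 : 0 < X 1 1 by nra.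
  have h := iN P (in_ccw_l _ _).
  rewrite -(in_ccw_mob (C:=C) (mob N P) _ hPQ) ?dC ?ltr01 // in h.
  rewrite mP mQ -conj_mob ?det_nz // mP in_ccw_0inf /mob -/X x10 mul0r add0r in h.
  apply: nonneg22; rewrite ?x00 ?x10 ?lexx; try lra.
  move: h; rewrite gt_eqF //= => h.
  by move: h; rewrite mulr0 add0r pmulr_lge0 // invr_gt0.
Qed.

Lemma det_inv_nz M : \det M = 1 -> \det (invmx M) != 0.
Proof. by move=> h; rewrite det_inv h invr1 oner_eq0. Qed.

Lemma arc_minus M N P Q : \det M = 1 -> \det N = 1 ->
  repelling_fp M P -> repelling_fp N Q -> P != Q ->
  maps_into_self (invmx M) P Q -> maps_into_self (invmx N) P Q ->
  exists C, SL2 C /\ nonneg_mx (C *m M *m invmx C) /\ nonneg_mx (C *m N *m invmx C).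
Proof.
move=> dM dN [_ [l [hl0 [hl hMP]]]] [_ [m [hm0 [hm hNQ]]]] hPQ iM iN.
have hQP : Q != P by rewrite eq_sym.
have [C [D [dC [hD [hCQ hCP]]]]] := construct hQP.
have dC0 := det_nz dC.
have hCQ' : C *m hvec Q = 1 *: hvec (Some 0) by rewrite scale1r.
have mQ : mob C Q = Some 0 := mob_of (oner_neq0 _) hCQ'.
have mP : mob C P = None := mob_of hD hCP.
exists C; split => //; split.
- set X := C *m M *m invmx C.
  have [x00 x10] := fixInf (eig_conj dC0 hD hCP hMP).
  have dX : \det X = 1 by rewrite det_conj.
  move: dX; rewrite det22 x00 x10 mulr0 subr0 => dX.
  have x11 : 0 < X 1 1 by nra.
  have h := iM Q (in_ccw_r _ _).
  rewrite -(in_ccw_mob (C:=C) (mob (invmx M) Q) _ hPQ) ?dC ?ltr01 // in h.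
  rewrite mP mQ in_ccw_inf0 in h.
  have hy : mob X (mob C (mob (invmx M) Q)) = Some 0.
    by rewrite conj_mob ?det_nz // mob_inv' ?det_nz.
  apply: nonneg22; rewrite ?x00 ?x10 ?lexx; try lra.
  move: h hy; case: (mob C (mob (invmx M) Q)) => [z|] /= h hy.
  + move: hy; rewrite /mob -/X x10 mul0r add0r (gt_eqF x11) => -[] /eqP.
    rewrite mulf_eq0 invr_eq0 (gt_eqF x11) orbF x00 => /eqP hz; nra.
  + by move: hy; rewrite /mob -/X x10 eqxx.
- set X := C *m N *m invmx C.
  have [x01 x11] := fix0 (eig_conj dC0 (oner_neq0 _) hCQ' hNQ).
  have dX : \det X = 1 by rewrite det_conj.
  move: dX; rewrite det22 x01 x11 mul0r subr0 => dX.
  have x00 : 0 < X 0 0 by nra.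
  have h := iN P (in_ccw_l _ _).
  rewrite -(in_ccw_mob (C:=C) (mob (invmx N) P) _ hPQ) ?dC ?ltr01 // in h.
  rewrite mP mQ in_ccw_inf0 in h.
  have hy : mob X (mob C (mob (invmx N) P)) = None.
    by rewrite conj_mob ?det_nz // mob_inv' ?det_nz.
  apply: nonneg22; rewrite ?x01 ?x11 ?lexx; try lra.
  move: h hy; case: (mob C (mob (invmx N) P)) => [z|] /= h hy.
  + move: hy; rewrite /mob -/X x11; case: eqP => // /eqP hz _; nra.
  + by move: hy; rewrite /mob -/X; case: eqP => [->|].
Qed.

Lemma lin2 (a b u0 u1 v0 v1 : R) : u0 * v1 - u1 * v0 != 0 ->
  a * u0 + b * u1 = 0 -> a * v0 + b * v1 = 0 -> a = 0 /\ b = 0.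
Proof.
move=> hw h1 h2.
have ea : a * (u0 * v1 - u1 * v0) = 0.
  have -> : a * (u0 * v1 - u1 * v0) = v1 * (a * u0 + b * u1) - u1 * (a * v0 + b * v1) by ring.
  by rewrite h1 h2 !mulr0 subr0.
have eb : b * (u0 * v1 - u1 * v0) = 0.
  have -> : b * (u0 * v1 - u1 * v0) = u0 * (a * v0 + b * v1) - v0 * (a * u0 + b * u1) by ring.
  by rewrite h1 h2 !mulr0 subr0.
move/eqP: ea; move/eqP: eb; rewrite !mulf_eq0 (negbTE hw) !orbF => /eqP -> /eqP ->.
by [].
Qed.

Lemma eq_on_basis (X Y : 'M[R]_2) u v : w u v != 0 ->
  X *m u = Y *m u -> X *m v = Y *m v -> X = Y.
Proof.
move=> hw hu hv.
have e := fun (z : 'cV[R]_2) (h : X *m z = Y *m z) i =>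
  congr1 (fun m : 'cV[R]_2 => m i 0) h.
have := e _ hu 0; have := e _ hu 1; have := e _ hv 0; have := e _ hv 1.
rewrite !mulv22 => v1 v0 u1 u0.
have [a0 a1] : X 0 0 - Y 0 0 = 0 /\ X 0 1 - Y 0 1 = 0.
  apply: (lin2 hw); [move: u0|move: v0]; move=> h; nra.
have [b0 b1] : X 1 0 - Y 1 0 = 0 /\ X 1 1 - Y 1 1 = 0.
  apply: (lin2 hw); [move: u1|move: v1]; move=> h; nra.
by apply: eq22; apply/eqP; rewrite -subr_eq0; apply/eqP.
Qed.

Lemma comm_hyp (M N : 'M[R]_2) u v (l1 l2 m1 m2 : R) : w u v != 0 ->
  M *m u = l1 *: u -> M *m v = l2 *: v -> N *m u = m1 *: u -> N *m v = m2 *: v ->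
  M *m N = N *m M.
Proof.
move=> hw h1 h2 h3 h4; apply: (eq_on_basis hw).
  by rewrite -!mulmxA h1 h3 -!scalemxAr h1 h3 !scalerA mulrC.
by rewrite -!mulmxA h2 h4 -!scalemxAr h2 h4 !scalerA mulrC.
Qed.

Lemma fixv (X : 'M[R]_2) p : X *m hvec p = hvec p ->
  X 0 0 * hvec p 0 0 + X 0 1 * hvec p 1 0 = hvec p 0 0 /\
  X 1 0 * hvec p 0 0 + X 1 1 * hvec p 1 0 = hvec p 1 0.
Proof.
move=> h; split.
  by have := congr1 (fun m : 'cV[R]_2 => m 0 0) h; rewrite mulv22.
by have := congr1 (fun m : 'cV[R]_2 => m 1 0) h; rewrite mulv22.
Qed.

Lemma par_form (X : 'M[R]_2) (z : R) : \det X = 1 -> X *m hvec (Some z) = hvec (Some z) ->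
  [/\ X 0 0 = 1 + X 1 0 * z, X 0 1 = - (X 1 0 * z * z) & X 1 1 = 1 - X 1 0 * z].
Proof.
move=> dX /fixv; rewrite (proj1 (hvecS _)) (proj2 (hvecS _)) !mulr1 => -[h1 h2].
have f11 : X 1 1 = 1 - X 1 0 * z by rewrite -h2; ring.
have f01 : X 0 1 = z - X 0 0 * z by rewrite -{1}h1; ring.
rewrite det22 f11 f01 in dX.
have f00 : X 0 0 = 1 + X 1 0 * z by rewrite -dX; ring.
split; [exact: f00 | rewrite f01 f00; ring | exact: f11].
Qed.

Lemma par_formN (X : 'M[R]_2) : \det X = 1 -> X *m hvec None = hvec None ->
  [/\ X 0 0 = 1, X 1 0 = 0 & X 1 1 = 1].
Proof.
move=> dX /fixv; rewrite (proj1 hvecN) (proj2 hvecN) !mulr1 !mulr0 !addr0 => -[h1 h2].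
by move: dX; rewrite det22 h1 h2 mulr0 subr0 mul1r.
Qed.

Lemma comm_par (M N : 'M[R]_2) p : \det M = 1 -> \det N = 1 ->
  M *m hvec p = hvec p -> N *m hvec p = hvec p -> M *m N = N *m M.
Proof.
case: p => [z|] dM dN hM hN.
  have [a0 a1 a3] := par_form dM hM; have [b0 b1 b3] := par_form dN hN.
  by apply: eq22; rewrite !mul22 ?a0 ?a1 ?a3 ?b0 ?b1 ?b3; ring.
have [a0 a2 a3] := par_formN dM hM; have [b0 b2 b3] := par_formN dN hN.
by apply: eq22; rewrite !mul22 ?a0 ?a2 ?a3 ?b0 ?b2 ?b3; ring.
Qed.

Lemma eig_same (X : 'M[R]_2) p (l m : R) : X *m hvec p = l *: hvec p ->
  X *m hvec p = m *: hvec p -> l = m.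
Proof.
move=> h1; rewrite h1 => /eqP; rewrite -subr_eq0 -scalerBl scaler_eq0 (negbTE (hvec_nz p)) orbF.
by rewrite subr_eq0 => /eqP.
Qed.

Lemma case3 (A B : 'M[R]_2) ap am : \det A = 1 -> \det B = 1 ->
  attracting_fp A ap -> repelling_fp A am -> attracting_fp B ap -> repelling_fp B am ->
  A *m B = B *m A.
Proof.
move=> dA dB [_ [l1 [hl1 hA1]]] [_ [l2 [hl2 [hl2' hA2]]]] [_ [m1 [hm1 hB1]]] [_ [m2 [hm2 [hm2' hB2]]]].
case: (eqVneq ap am) => [e|ne].
  subst am.
  have e1 := eig_same hA1 hA2; have e2 := eig_same hB1 hB2.
  have l1e : l1 = 1 by lra.
  have m1e : m1 = 1 by lra.
  by apply: (comm_par (p := ap)); rewrite // ?hA1 ?hB1 ?l1e ?m1e scale1r.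
apply: (comm_hyp _ hA1 hA2 hB1 hB2).
by apply/eqP => /w_hvec_eq0 h; rewrite h eqxx in ne.
Qed.

Lemma forward (A B : 'M[R]_2) : \det A = 1 -> \det B = 1 -> A *m B != B *m A ->
  coherently_oriented A B ->
  exists C, SL2 C /\ nonneg_mx (C *m A *m invmx C) /\ nonneg_mx (C *m B *m invmx C).
Proof.
move=> dA dB hAB [ap [am [bp [bm [hAp [hAm [hBp [hBm [I1 I2]]]]]]]]].
case: (eqVneq ap bp) => [eab|nab].
  subst bp; case: (eqVneq am bm) => [emb|nmb].
    by subst bm; rewrite (case3 dA dB hAp hAm hBp hBm) eqxx in hAB.
  case: I2 => [e|[[h1 h2]|[h1 h2]]]; first by rewrite e eqxx in nmb.
    exact: arc_minus dA dB hAm hBm nmb h1 h2.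
  have nbm : bm != am by rewrite eq_sym.
  have [C [h0 [h3 h4]]] := arc_minus dB dA hBm hAm nbm h2 h1.
  by exists C.
case: I1 => [e|[[h1 h2]|[h1 h2]]]; first by rewrite e eqxx in nab.
  exact: arc_plus dA dB hAp hBp nab h1 h2.
have nba : bp != ap by rewrite eq_sym.
have [C [h0 [h3 h4]]] := arc_plus dB dA hBp hAp nba h2 h1.
by exists C.
Qed.

Definition PF (M : 'M[R]_2) (e : 'cV[R]_2) (l : R) :=
  0 <= e 0 0 /\ 0 <= e 1 0 /\ e != 0 /\ 1 <= l /\ M *m e = l *: e /\
   forall u : 'cV[R]_2, 0 <= u 0 0 -> 0 <= u 1 0 ->
     (w e u <= 0 -> w (M *m u) u <= 0) /\ (0 <= w e u -> 0 <= w (M *m u) u).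

Ltac splitall := repeat match goal with |- _ /\ _ => split end.

Definition v2 (x0 y0 : R) : 'cV[R]_2 := \col_i (if i == 0 then x0 else y0).
Lemma v2E (x0 y0 : R) : v2 x0 y0 0 0 = x0 /\ v2 x0 y0 1 0 = y0.
Proof. by rewrite /v2 !mxE. Qed.
Lemma v2_nz (x0 y0 : R) : x0 != 0 \/ y0 != 0 -> v2 x0 y0 != 0.
Proof.
move=> h; apply/eqP => e; have [e0 e1] := v2E x0 y0; rewrite e !mxE in e0 e1.
by case: h; rewrite -?e0 -?e1 eqxx.
Qed.

Lemma perron (M : 'M[R]_2) : nonneg_mx M -> \det M = 1 -> exists e l, PF M e l.
Proof.
move=> hM dM.
have ha := hM 0 0; have hb := hM 0 1; have hc := hM 1 0; have hd := hM 1 1.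
rewrite det22 in dM.
set a := M 0 0 in ha dM *; set b := M 0 1 in hb dM *; set c := M 1 0 in hc dM *; set d := M 1 1 in hd dM *.
have wE : forall u, w (M *m u) u = (a * u 0 0 + b * u 1 0) * u 1 0 - (c * u 0 0 + d * u 1 0) * u 0 0.
  by move=> u; rewrite /w !mulv22.
have eigE : forall (x0 y0 l : R), a * x0 + b * y0 = l * x0 -> c * x0 + d * y0 = l * y0 -> M *m v2 x0 y0 = l *: v2 x0 y0.
  move=> x0 y0 l h1 h2; apply: eqv2; rewrite !mulv22 /v2 !mxE /=; by rewrite ?h1 ?h2.
have wv : forall (x0 y0 : R) u, w (v2 x0 y0) u = x0 * u 1 0 - y0 * u 0 0.
  by move=> x0 y0 u; rewrite /w !(proj1 (v2E _ _)) !(proj2 (v2E _ _)).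
case: (eqVneq b 0) => [b0|bn0]; last first.
  have bp : 0 < b by rewrite lt_neqAle eq_sym bn0 hb.
  set t := a + d.
  have t4 : 0 <= t ^+ 2 - 4 by rewrite /t; have := sqr_ge0 (a - d); have := mulr_ge0 hb hc; nra.
  set s := Num.sqrt (t ^+ 2 - 4).
  have s0 : 0 <= s by apply: sqrtr_ge0.
  have s2 : s ^+ 2 = t ^+ 2 - 4 by rewrite sqr_sqrtr.
  have tp : 0 <= t by rewrite /t; lra.
  have t2 : 2 <= t by nra.
  set l := (t + s) / 2.
  have lq : l ^+ 2 - t * l + 1 = 0.
    have -> : l ^+ 2 - t * l + 1 = (s ^+ 2 - t ^+ 2 + 4) / 4 by rewrite /l; field.
    by rewrite s2 (_ : t ^+ 2 - 4 - t ^+ 2 + 4 = 0) ?mul0r //; ring.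
  have l1 : 1 <= l by rewrite /l; lra.
  have hla : 0 <= l - a.
    have e1 : (l - a) * (l - d) = b * c by rewrite /t in lq; nra.
    have e2 : (l - a) + (l - d) = s by rewrite /l /t; field.
    nra.
  have hld : 0 <= l - d.
    have e1 : (l - a) * (l - d) = b * c by rewrite /t in lq; nra.
    have e2 : (l - a) + (l - d) = s by rewrite /l /t; field.
    nra.
  exists (v2 b (l - a)), l; rewrite /PF; splitall.
  - by rewrite (proj1 (v2E _ _)).
  - by rewrite (proj2 (v2E _ _)).
  - by apply: v2_nz; left.
  - done.
  - apply: eigE; first ring.
    rewrite /t in lq; nra.
  - move=> u u0 u1; rewrite wE wv.
    have id : b * ((a * u 0 0 + b * u 1 0) * u 1 0 - (c * u 0 0 + d * u 1 0) * u 0 0) =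
      (b * u 1 0 - (l - a) * u 0 0) * (b * u 1 0 + (l - d) * u 0 0)
      + (l ^+ 2 - t * l + 1 + (a * d - b * c - 1)) * u 0 0 ^+ 2 by rewrite /t; ring.
    rewrite lq dM subrr add0r mul0r addr0 in id.
    have F0 : 0 <= b * u 1 0 + (l - d) * u 0 0 by nra.
    split => h; nra.
case: (eqVneq c 0) => [c0|cn0]; last first.
  have cp : 0 < c by rewrite lt_neqAle eq_sym cn0 hc.
  set t := a + d.
  have t4 : 0 <= t ^+ 2 - 4 by rewrite /t; have := sqr_ge0 (a - d); have := mulr_ge0 hb hc; nra.
  set s := Num.sqrt (t ^+ 2 - 4).
  have s0 : 0 <= s by apply: sqrtr_ge0.
  have s2 : s ^+ 2 = t ^+ 2 - 4 by rewrite sqr_sqrtr.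
  have tp : 0 <= t by rewrite /t; lra.
  have t2 : 2 <= t by nra.
  set l := (t + s) / 2.
  have lq : l ^+ 2 - t * l + 1 = 0.
    have -> : l ^+ 2 - t * l + 1 = (s ^+ 2 - t ^+ 2 + 4) / 4 by rewrite /l; field.
    by rewrite s2 (_ : t ^+ 2 - 4 - t ^+ 2 + 4 = 0) ?mul0r //; ring.
  have l1 : 1 <= l by rewrite /l; lra.
  have e1 : (l - a) * (l - d) = b * c by rewrite /t in lq; nra.
  have e2 : (l - a) + (l - d) = s by rewrite /l /t; field.
  have hla : 0 <= l - a by nra.
  have hld : 0 <= l - d by nra.
  exists (v2 (l - d) c), l; rewrite /PF; splitall.
  - by rewrite (proj1 (v2E _ _)).
  - by rewrite (proj2 (v2E _ _)).
  - by apply: v2_nz; right.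
  - done.
  - apply: eigE; last ring.
    rewrite b0 in e1; nra.
  - move=> u u0 u1; rewrite wE wv.
    have id : c * ((a * u 0 0 + b * u 1 0) * u 1 0 - (c * u 0 0 + d * u 1 0) * u 0 0) =
      ((l - d) * u 1 0 - c * u 0 0) * (c * u 0 0 + (l - a) * u 1 0)
      - (l ^+ 2 - t * l + 1 + (a * d - b * c - 1)) * u 1 0 ^+ 2 by rewrite /t; ring.
    rewrite lq dM subrr add0r mul0r subr0 in id.
    have F0 : 0 <= c * u 0 0 + (l - a) * u 1 0 by nra.
    split => h; nra.
rewrite b0 c0 mulr0 subr0 in dM.
case: (lerP 1 a) => ha1.
  exists (v2 1 0), a; rewrite /PF; splitall.
  - by rewrite (proj1 (v2E _ _)).
  - by rewrite (proj2 (v2E _ _)).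
  - by apply: v2_nz; left; rewrite oner_eq0.
  - done.
  - by apply: eigE; rewrite ?b0 ?c0; ring.
  - move=> u u0 u1; rewrite wE wv b0 c0.
    have hda : d <= a by nra.
    have := mulr_ge0 u0 u1 => hp.
    split => h.
      have u1z : u 1 0 = 0 by lra.
      rewrite u1z; lra.
    nra.
have hd1 : 1 < d by nra.
exists (v2 0 1), d; rewrite /PF; splitall.
- by rewrite (proj1 (v2E _ _)).
- by rewrite (proj2 (v2E _ _)).
- by apply: v2_nz; right; rewrite oner_eq0.
- lra.
- by apply: eigE; rewrite ?b0 ?c0; ring.
- move=> u u0 u1; rewrite wE wv b0 c0.
  have := mulr_ge0 u0 u1 => hp.
  split => h.
    nra.
  have u0z : u 0 0 = 0 by lra.
  rewrite u0z; lra.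
Qed.

Lemma hvec_nn p : ple (Some 0) p -> 0 <= hvec p 0 0 /\ 0 <= hvec p 1 0.
Proof.
case: p => [z|] /= h.
  by rewrite (proj1 (hvecS _)) (proj2 (hvecS _)) ler01.
by rewrite (proj1 hvecN) (proj2 hvecN) ler01 lexx.
Qed.

Lemma pt_nn v : 0 <= v 0 0 -> 0 <= v 1 0 -> ple (Some 0) (pt v).
Proof. by move=> h0 h1; rewrite /pt; case: eqP => //= _; rewrite divr_ge0. Qed.

Lemma kpt_pos v : 0 <= v 0 0 -> 0 <= v 1 0 -> v != 0 -> 0 < kpt v.
Proof.
move=> h0 h1 hv; have := kpt_nz hv; rewrite /kpt; case: ifP => _ h.
  by rewrite lt_neqAle eq_sym h invr_ge0.
by rewrite lt_neqAle eq_sym h invr_ge0.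
Qed.

Lemma mul_nn M v : nonneg_mx M -> 0 <= v 0 0 -> 0 <= v 1 0 ->
  0 <= (M *m v) 0 0 /\ 0 <= (M *m v) 1 0.
Proof. by move=> hM h0 h1; rewrite !mulv22; split; apply: addr_ge0; apply: mulr_ge0. Qed.

Lemma eig_fix M p (l : R) : l != 0 -> M *m hvec p = l *: hvec p -> mob M p = p.
Proof. by move=> hl h; rewrite mobE h pt_scale // pt_hvec. Qed.

Lemma PA M e (l : R) x : \det M = 1 -> nonneg_mx M -> PF M e l -> ple (pt e) x ->
  ple (pt e) (mob M x) /\ ple (mob M x) x.
Proof.
move=> dM hM [e0 [e1 [en [l1 [hMe hQ]]]]] hx.
have x0 : ple (Some 0) x := ple_trans (pt_nn e0 e1) hx.
have [u0 u1] := hvec_nn x0.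
have [v0 v1] := mul_nn hM u0 u1.
have hMu : M *m hvec x != 0 by apply: mulmx_nz; rewrite ?det_nz ?hvec_nz.
have kp := kpt_pos v0 v1 hMu; have ke := kpt_pos e0 e1 en.
have wl : l * w e (M *m hvec x) = w e (hvec x).
  by rewrite -w_scalel -hMe w_mul dM mul1r.
move: hx; rewrite !ple_w hvec_mob ?det_nz // hvec_pt // !w_scalel !w_scaler.
rewrite !pmulr_rle0 // => h.
have [hq _] := hQ _ u0 u1.
split; [nra | exact: hq].
Qed.

Lemma PB M e (l : R) x : \det M = 1 -> nonneg_mx M -> PF M e l -> ple (Some 0) x ->
  ple x (pt e) -> ple (mob M x) (pt e) /\ ple x (mob M x).
Proof.
move=> dM hM [e0 [e1 [en [l1 [hMe hQ]]]]] x0 hx.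
have [u0 u1] := hvec_nn x0.
have [v0 v1] := mul_nn hM u0 u1.
have hMu : M *m hvec x != 0 by apply: mulmx_nz; rewrite ?det_nz ?hvec_nz.
have kp := kpt_pos v0 v1 hMu; have ke := kpt_pos e0 e1 en.
have wl : l * w e (M *m hvec x) = w e (hvec x).
  by rewrite -w_scalel -hMe w_mul dM mul1r.
move: hx; rewrite !ple_w hvec_mob ?det_nz // hvec_pt // !w_scalel !w_scaler.
rewrite !pmulr_rle0 // (w_anti e (hvec x)) oppr_le0 => h.
rewrite (w_anti e (M *m hvec x)) (w_anti (M *m hvec x) (hvec x)) !oppr_le0.
have [_ hq] := hQ _ u0 u1.
split; [nra | exact: hq].
Qed.

Lemma core M N : nonneg_mx M -> \det M = 1 -> nonneg_mx N -> \det N = 1 ->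
  exists a b, attracting_fp M a /\ attracting_fp N b /\ I_defined M N a b.
Proof.
move=> hM dM hN dN.
have [e [l PFe]] := perron hM dM; have [f [m PFf]] := perron hN dN.
have att : forall X g k, PF X g k -> attracting_fp X (pt g).
  move=> X g k [g0 [g1 [gn [k1 [hXg _]]]]].
  have hv : X *m hvec (pt g) = k *: hvec (pt g).
    by rewrite hvec_pt // -scalemxAr hXg !scalerA mulrC.
  split; last by exists k.
  by apply: (eig_fix (l := k)) => //; rewrite gt_eqF // (lt_le_trans ltr01).
have nn : forall X g k, PF X g k -> ple (Some 0) (pt g).
  by move=> X g k [g0 [g1 _]]; apply: pt_nn.
exists (pt e), (pt f); split; first exact: att PFe.
split; first exact: att PFf.
case/orP: (ple_total (pt e) (pt f)) => h.
  right; left; split => x; rewrite /in_ccw h => /andP [h1 h2]; apply/andP.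
    have [A1 A2] := PA dM hM PFe h1.
    by split => //; exact: ple_trans A2 h2.
  have x0 := ple_trans (nn _ _ _ PFe) h1.
  have [B1 B2] := PB dN hN PFf x0 h2.
  by split => //; exact: ple_trans h1 B2.
right; right; split => x; rewrite /in_ccw h => /andP [h1 h2]; apply/andP.
  have x0 := ple_trans (nn _ _ _ PFf) h1.
  have [B1 B2] := PB dM hM PFe x0 h2.
  by split => //; exact: ple_trans h1 B2.
have [A1 A2] := PA dN hN PFf h1.
by split => //; exact: ple_trans A2 h2.
Qed.

Lemma det_of_inv C Ci : Ci *m C = 1%:M -> \det Ci * \det C = 1.
Proof. by move=> h; rewrite -det_mulmx h det1. Qed.

Lemma conj_swap C Ci M M' : Ci *m C = 1%:M -> M' = C *m M *m Ci -> Ci *m M' = M *m Ci.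
Proof. by move=> h1 ->; rewrite !mulmxA h1 mul1mx. Qed.

Lemma tr_fp C Ci M M' p : C *m Ci = 1%:M -> Ci *m C = 1%:M -> M' = C *m M *m Ci ->
  attracting_fp M' p -> attracting_fp M (mob Ci p).
Proof.
move=> h1 h2 hM [_ [l [hl h]]].
have dCi : \det Ci != 0.
  by apply/eqP => e; move: (det_of_inv h2); rewrite e mul0r => /eqP; rewrite eq_sym oner_eq0.
have hv : M *m hvec (mob Ci p) = l *: hvec (mob Ci p).
  rewrite hvec_mob // -!scalemxAr mulmxA -(conj_swap h2 hM) -mulmxA h.
  by rewrite -scalemxAr !scalerA mulrC.
split; last by exists l.
by apply: (eig_fix (l := l)) => //; rewrite gt_eqF // (lt_le_trans ltr01).
Qed.

Lemma tr_maps C Ci M M' a b : C *m Ci = 1%:M -> Ci *m C = 1%:M -> 0 < \det C ->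
  M' = C *m M *m Ci -> \det M != 0 -> a != b ->
  maps_into_self M' a b -> maps_into_self M (mob Ci a) (mob Ci b).
Proof.
move=> h1 h2 dC hM dM hab hm x hx.
have dCi : 0 < \det Ci.
  have := det_of_inv h2 => e.
  have : \det Ci * \det C > 0 by rewrite e ltr01.
  by rewrite pmulr_lgt0.
have dCi0 : \det Ci != 0 by rewrite gt_eqF.
have dC0 : \det C != 0 by rewrite gt_eqF.
have ex : mob Ci (mob C x) = x by rewrite mob_comp // h2 mob1.
rewrite -ex in_ccw_mob // in hx.
have := hm _ hx; rewrite -(in_ccw_mob (C := Ci) _ dCi hab).
have dM' : \det M' != 0 by rewrite hM !det_mulmx !mulf_neq0.
by rewrite mob_comp // (conj_swap h2 hM) -mob_comp // ex.
Qed.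

Lemma tr_I C Ci M N M' N' a b : C *m Ci = 1%:M -> Ci *m C = 1%:M -> 0 < \det C ->
  M' = C *m M *m Ci -> N' = C *m N *m Ci -> \det M != 0 -> \det N != 0 ->
  I_defined M' N' a b -> I_defined M N (mob Ci a) (mob Ci b).
Proof.
move=> h1 h2 dC hM hN dM dN.
case: (eqVneq a b) => [-> _|hab]; first by left.
have hba : b != a by rewrite eq_sym.
case=> [e|[[m1 m2]|[m1 m2]]]; first by rewrite e eqxx in hab.
  by right; left; split; [exact: (tr_maps h1 h2 dC hM dM hab m1) | exact: (tr_maps h1 h2 dC hN dN hab m2)].
by right; right; split; [exact: (tr_maps h1 h2 dC hM dM hba m1) | exact: (tr_maps h1 h2 dC hN dN hba m2)].
Qed.

Lemma att_inv_rep A p : \det A = 1 -> attracting_fp (invmx A) p -> repelling_fp A p.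
Proof.
move=> dA [_ [k [hk h]]].
have k0 : k != 0 by rewrite gt_eqF // (lt_le_trans ltr01).
have uA : A \in unitmx by apply: unit_det; rewrite dA oner_eq0.
have hv : A *m hvec p = k^-1 *: hvec p.
  have : A *m (invmx A *m hvec p) = hvec p by rewrite mulmxA mulmxV // mul1mx.
  rewrite h -scalemxAr => e.
  by rewrite -[in RHS]e scalerA mulVf // scale1r.
split; first by apply: (eig_fix (l := k^-1)) => //; rewrite invr_eq0.
exists k^-1; split; first by rewrite invr_gt0 (lt_le_trans ltr01).
by split => //; rewrite invf_le1 // (lt_le_trans ltr01).
Qed.

Definition J2 := mk22 0 1 (-1) 0.
Definition J2' := mk22 0 (-1) 1 0.

Lemma id22 : (1%:M : 'M[R]_2) = mk22 1 0 0 1.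
Proof. by apply: eq22; rewrite !mxE. Qed.

Lemma J2J2' : J2 *m J2' = 1%:M.
Proof. by apply: eq22; rewrite !mul22 /J2 /J2' /mk22 !mxE /=; ring. Qed.
Lemma J2'J2 : J2' *m J2 = 1%:M.
Proof. by apply: eq22; rewrite !mul22 /J2 /J2' /mk22 !mxE /=; ring. Qed.
Lemma detJ2 : \det J2 = 1.
Proof. by rewrite det22 /J2 /mk22 !mxE /=; ring. Qed.
Lemma symp X : \det X = 1 -> X^T *m J2 *m X = J2.
Proof.
rewrite det22 => d; apply: eq22; rewrite !mul22 /J2 /mk22 !mxE /=; nra.
Qed.

Lemma trans_inv X Y : \det X = 1 -> X *m Y = 1%:M -> X^T = J2 *m Y *m J2'.
Proof.
move=> dX hXY.
have -> : X^T = X^T *m J2 *m (X *m Y) *m J2' by rewrite hXY mulmx1 -mulmxA J2J2' mulmx1.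
by rewrite mulmxA (symp dX).
Qed.

Lemma backward A B C : \det A = 1 -> \det B = 1 -> \det C = 1 ->
  nonneg_mx (C *m A *m invmx C) -> nonneg_mx (C *m B *m invmx C) -> coherently_oriented A B.
Proof.
move=> dA dB dC hA hB.
have uC : C \in unitmx by apply: unit_det; rewrite dC oner_eq0.
have uA : A \in unitmx by apply: unit_det; rewrite dA oner_eq0.
have uB : B \in unitmx by apply: unit_det; rewrite dB oner_eq0.
set Ci := invmx C.
have h1 : C *m Ci = 1%:M by rewrite mulmxV.
have h2 : Ci *m C = 1%:M by rewrite mulVmx.
have dC0 : 0 < \det C by rewrite dC ltr01.
set A' := C *m A *m Ci; set B' := C *m B *m Ci.
have dA' : \det A' = 1 by rewrite det_conj ?dA // det_nz.
have dB' : \det B' = 1 by rewrite det_conj ?dB // det_nz.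
have [al [be [hal [hbe hI]]]] := core hA dA' hB dB'.
have hI' := tr_I h1 h2 dC0 (erefl A') (erefl B') (det_nz dA) (det_nz dB) hI.
have hAT : nonneg_mx A'^T by move=> i j; rewrite mxE; exact: hA.
have hBT : nonneg_mx B'^T by move=> i j; rewrite mxE; exact: hB.
have dAT : \det A'^T = 1 by rewrite det_tr.
have dBT : \det B'^T = 1 by rewrite det_tr.
have [ga [de [hga [hde hI2]]]] := core hAT dAT hBT dBT.
set D := J2 *m C; set Di := Ci *m J2'.
have hD1 : D *m Di = 1%:M by rewrite /D /Di mulmxA -(mulmxA J2) h1 mulmx1 J2J2'.
have hD2 : Di *m D = 1%:M by rewrite /D /Di mulmxA -(mulmxA Ci) J2'J2 mulmx1 h2.
have dD : 0 < \det D by rewrite /D det_mulmx detJ2 dC mulr1 ltr01.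
have inv1 : forall X, X \in unitmx -> (C *m X *m Ci) *m (C *m invmx X *m Ci) = 1%:M.
  move=> X uX; rewrite !mulmxA mulmxKV // mulmxK // h1 //.
have eqA : A'^T = D *m invmx A *m Di.
  by rewrite (trans_inv dA' (inv1 _ uA)) /D /Di !mulmxA.
have eqB : B'^T = D *m invmx B *m Di.
  by rewrite (trans_inv dB' (inv1 _ uB)) /D /Di !mulmxA.
have diA : \det (invmx A) != 0 by rewrite det_inv dA invr1 oner_eq0.
have diB : \det (invmx B) != 0 by rewrite det_inv dB invr1 oner_eq0.
have hI2' := tr_I hD1 hD2 dD eqA eqB diA diB hI2.
exists (mob Ci al), (mob Di ga), (mob Ci be), (mob Di de).
split; first exact: (tr_fp h1 h2 (erefl A') hal).
split; first exact: (att_inv_rep dA (tr_fp hD1 hD2 eqA hga)).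
split; first exact: (tr_fp h1 h2 (erefl B') hbe).
split; first exact: (att_inv_rep dB (tr_fp hD1 hD2 eqB hde)).
by split.
Qed.

End Aux.

Unset Implicit Arguments.
Set Strict Implicit.

Theorem lemma2p2 (R : realType) (A B : 'M[R]_2) :
  SL2 A -> SL2 B -> A *m B != B *m A ->
  2%:R <= \tr A -> 2%:R <= \tr B ->
  (coherently_oriented A B <->
   exists C : 'M[R]_2, SL2 C /\
     nonneg_mx (C *m A *m invmx C) /\ nonneg_mx (C *m B *m invmx C)).
Proof.
move=> sA sB hAB _ _; split.
  exact: forward.
by move=> [C [sC [hA hB]]]; exact: backward hA hB.
Qed.
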